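(* If $A,B\in\mathrm{Sym}_{>}(\mathbb C^{2d})$, then $A\#B$ is well defined and $A\#B\in\mathrm{Sym}_{>}(\mathbb C^{2d})$; thus $(\mathrm{Sym}_{>}(\mathbb C^{2d}),\#)$ is a semigroup. Moreover, if $A,B\in\mathrm{Sym}^{\rm qnd}_{>}(\mathbb C^{2d})$, then $A\#B\in\mathrm{Sym}^{\rm qnd}_{>}(\mathbb C^{2d})$, so $(\mathrm{Sym}^{\rm qnd}_{>}(\mathbb C^{2d}),\#)$ is also a semigroup.
   Context: Let $d\ge 1$, let $\mathbb 1$ denote an identity matrix, and let $\theta=\begin{bmatrix}0&-i\mathbb 1_d\\ i\mathbb 1_d&0\end{bmatrix}$ ($2d\times 2d$). $\mathrm{Sym}(\mathbb C^{n})$ denotes the set of complex symmetric $n\times n$ matrices; $\mathrm{Sym}_{>}(\mathbb C^{n})=\{A\in\mathrm{Sym}(\mathbb C^n):\ \Re A \text{ is positive definite}\}$ where $\Re A=(A+\bar A)/2$; $\mathrm{Sym}^{\rm qnd}_{>}(\mathbb C^{2d})=\{A\in\mathrm{Sym}_{>}(\mathbb C^{2d}):\det(\mathbb 1+A\theta)\ne0\}$. For $A,B\in\mathrm{Sym}(\mathbb C^{2d})$ such that $M=\begin{bmatrix}\theta A\theta&-\theta\\ \theta&\theta B\theta\end{bmatrix}$ is invertible, $A\#B:=J^TM^{-1}J$ with $J=\begin{bmatrix}-\mathbb 1_{2d}\\ \mathbb 1_{2d}\end{bmatrix}$; $A\#B$ is well defined iff $M$ is invertible. *)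

(* Defs.v *)
(* Complex numbers are modelled by an arbitrary
   numClosedFieldType C (e.g. algC); the statement is proved for all such C. *)
From HB Require Import structures.
From mathcomp Require Import all_boot all_order all_algebra.
Set Implicit Arguments. Unset Strict Implicit. Unset Printing Implicit Defensive.
Import Order.TTheory GRing.Theory Num.Theory.
Local Open Scope ring_scope.

Definition is_sym (C : numClosedFieldType) (n : nat) (A : 'M[C]_n) : Prop :=
  A^T = A.

Definition ReM (C : numClosedFieldType) (n : nat) (A : 'M[C]_n) : 'M[C]_n :=
  2^-1 *: (A + map_mx Num.conj A).

Definition posdef (C : numClosedFieldType) (n : nat) (M : 'M[C]_n) : Prop :=
  forall x : 'cV[C]_n, (forall i, x i 0 \is Num.real) -> x != 0 ->
    0 < (x^T *m M *m x) 0 0.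

Definition SymPos (C : numClosedFieldType) (n : nat) (A : 'M[C]_n) : Prop :=
  is_sym A /\ posdef (ReM A).

Definition theta (C : numClosedFieldType) (d : nat) : 'M[C]_(d + d) :=
  block_mx 0 (- ('i *: 1%:M)) ('i *: 1%:M) 0.

Definition SymPosQnd (C : numClosedFieldType) (d : nat) (A : 'M[C]_(d + d)) : Prop :=
  SymPos A /\ \det (1%:M + A *m theta C d) != 0.

Definition sharpM (C : numClosedFieldType) (d : nat) (A B : 'M[C]_(d + d))
  : 'M[C]_((d + d) + (d + d)) :=
  let t := theta C d in block_mx (t *m A *m t) (- t) t (t *m B *m t).

Definition sharpJ (C : numClosedFieldType) (d : nat) : 'M[C]_((d + d) + (d + d), d + d) :=
  col_mx (- 1%:M) 1%:M.

Definition sharp_defined (C : numClosedFieldType) (d : nat) (A B : 'M[C]_(d + d)) : Prop :=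
  sharpM A B \in unitmx.

Definition sharp (C : numClosedFieldType) (d : nat) (A B : 'M[C]_(d + d)) : 'M[C]_(d + d) :=
  (sharpJ C d)^T *m invmx (sharpM A B) *m sharpJ C d.

(* Main.v *)
Require Import Defs.
From HB Require Import structures.
From mathcomp Require Import all_boot all_order all_algebra.
From mathcomp Require Import ring.
Import Order.TTheory GRing.Theory Num.Theory.
Local Open Scope ring_scope.
Set Implicit Arguments. Unset Strict Implicit.

Section S.
Variable C : numClosedFieldType.
Variable d : nat.
Local Notation T := (theta C d).
Local Notation cj := (map_mx (@Num.conj C)).

Lemma thetaE : T = block_mx 0 (- ('i%:M)) ('i%:M) 0.
Proof. by rewrite /theta !scalemx1. Qed.

Lemma thetaK : T *m T = 1%:M.
Proof.
rewrite thetaE mulmx_block !mul0mx !mulmx0 !add0r !addr0 mulNmx mulmxN -!scalar_mxM.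
by rewrite -expr2 sqrCi (raddfN (@scalar_mx _ _)) opprK -scalar_mx_block.
Qed.

Lemma theta_tr : T^T = - T.
Proof.
rewrite thetaE tr_block_mx opp_block_mx !trmx0 oppr0 !tr_scalar_mx linearN /= opprK.
by rewrite tr_scalar_mx.
Qed.

Lemma theta_conj : cj T = - T.
Proof.
rewrite thetaE map_block_mx !map_mx0 map_mxN !map_scalar_mx /= conjCi.
by rewrite opp_block_mx oppr0 (raddfN (@scalar_mx _ _)).
Qed.

Lemma theta_adj : (cj T)^T = T.
Proof. by rewrite theta_conj linearN /= theta_tr opprK. Qed.

Lemma sharpJE n (y : 'M[C]_(d+d,n)) : sharpJ C d *m y = col_mx (- y) y.
Proof. by rewrite /sharpJ mul_col_mx mulNmx !mul1mx. Qed.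

Lemma sharpJtrE n (p q : 'M[C]_(d+d,n)) : (sharpJ C d)^T *m col_mx p q = q - p.
Proof. by rewrite /sharpJ tr_col_mx mul_row_col linearN /= !trmx1 mulNmx !mul1mx addrC. Qed.

Lemma sharpMcol (A B : 'M[C]_(d+d)) n (u v : 'M[C]_(d+d,n)) :
  sharpM A B *m col_mx (T *m u) (T *m v) =
  col_mx (T *m (A *m u) - v) (u + T *m (B *m v)).
Proof.
rewrite /sharpM mul_block_col -!mulmxA !(mulmxA T T) thetaK !mul1mx mulNmx.
by rewrite (mulmxA T T v) thetaK mul1mx.
Qed.

Lemma sharpP (A B : 'M[C]_(d+d)) n (u v : 'M[C]_(d+d,n)) :
  sharp_defined A B -> T *m (v - u) = A *m u + B *m v ->
  sharp A B *m (u + T *m (B *m v)) = A *m u + B *m v.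
Proof.
move=> hM h.
have hv : v - u = T *m (A *m u) + T *m (B *m v).
  by rewrite -(mul1mx (v-u)) -thetaK -mulmxA h mulmxDr.
have hv' : v = u + T *m (A *m u) + T *m (B *m v).
  by rewrite -addrA -hv addrC subrK.
have E : sharpM A B *m col_mx (T *m u) (T *m v) = sharpJ C d *m (u + T *m (B *m v)).
  rewrite sharpMcol sharpJE; congr col_mx.
  by rewrite {1}hv' (addrC u) -addrA opprD addrA subrr add0r.
rewrite /sharp -!mulmxA -E mulKmx // sharpJtrE -mulmxBr h //.
Qed.

Lemma sharpEx (A B : 'M[C]_(d+d)) n (y : 'M[C]_(d+d,n)) :
  sharp_defined A B -> exists u v,
  T *m (v - u) = A *m u + B *m v /\ u + T *m (B *m v) = y.
Proof.
move=> hM.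
pose z := invmx (sharpM A B) *m (sharpJ C d *m y).
pose u := T *m usubmx z. pose v := T *m dsubmx z.
have hz : col_mx (T *m u) (T *m v) = z.
  by rewrite /u /v !mulmxA thetaK !mul1mx vsubmxK.
have : sharpM A B *m col_mx (T *m u) (T *m v) = sharpJ C d *m y.
  by rewrite hz /z mulKVmx.
rewrite sharpMcol sharpJE => /eq_col_mx [h1 h2].
exists u, v; split => //.
have h3 : T *m (A *m u) - v = - (u + T *m (B *m v)) by rewrite h1 h2.
have h4 : T *m (A *m u) + T *m (B *m v) = v - u.
  apply/eqP; rewrite -subr_eq0; apply/eqP.
  have h5 : T *m (A *m u) - v + (u + T *m (B *m v)) = 0 by rewrite h3 addNr.
  by rewrite -h5 opprB addrACA [RHS]addrACA [- v + _]addrC.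
by rewrite -h4 mulmxDr !mulmxA thetaK !mul1mx.
Qed.

End S.
Section S2.
Variable C : numClosedFieldType.
Variable d : nat.
Local Notation T := (theta C d).

Lemma sharp_assoc (A B E : 'M[C]_(d+d)) :
  sharp_defined A B -> sharp_defined B E -> sharp_defined (sharp A B) E ->
  sharp_defined A (sharp B E) -> sharp (sharp A B) E = sharp A (sharp B E).
Proof.
move=> hAB hBE h1 h2.
have [u [v' [e1 e2]]] := sharpEx (1%:M : 'M[C]_(d+d)) h2.
have k2 := sharpP h2 e1.
have [z1 [z2 [f1 f2]]] := sharpEx v' hBE.
have kbe := sharpP hBE f1. rewrite f2 in kbe.
have g1 : T *m (z1 - u) = A *m u + B *m z1.
  have -> : z1 - u = (v' - u) - T *m (E *m z2) by rewrite -f2 addrAC addrK.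
  by rewrite mulmxBr e1 kbe (mulmxA T T) thetaK mul1mx addrA addrK.
have kab := sharpP hAB g1.
have g2 : T *m (z2 - (u + T *m (B *m z1))) = sharp A B *m (u + T *m (B *m z1)) + E *m z2.
  rewrite kab.
  have -> : z2 - (u + T *m (B *m z1)) = (z2 - z1) + (z1 - u) - T *m (B *m z1).
    by rewrite (addrA (z2 - z1)) subrK opprD addrA.
  rewrite !mulmxBr mulmxDr f1 g1 (mulmxA T T) thetaK mul1mx.
  by rewrite addrA addrK addrC addrA.
have k1 := sharpP h1 g2.
have X : u + T *m (B *m z1) + T *m (E *m z2) = 1%:M.
  by rewrite -e2 kbe mulmxDr addrA.
rewrite -[LHS]mulmx1 -X k1 kab -[RHS]mulmx1 -e2 k2 kbe.
by rewrite addrA.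
Qed.
End S2.
Section S3.
Variable C : numClosedFieldType.
Variable d : nat.
Local Notation T := (theta C d).

Lemma inj_unit m (N : 'M[C]_m) : (forall Y : 'M_m, N *m Y = 0 -> Y = 0) -> N \in unitmx.
Proof.
move=> h; rewrite -unitmx_tr -row_free_unit -kermx_eq0; apply/eqP.
apply: trmx_inj; rewrite trmx0; apply: h.
by rewrite -{1}(trmxK N) -trmx_mul mulmx_ker trmx0.
Qed.

Lemma unit_inj m (N : 'M[C]_m) n (Y : 'M[C]_(m,n)) : N \in unitmx -> N *m Y = 0 -> Y = 0.
Proof. by move=> hN hY; rewrite -(mulKmx hN Y) hY mulmx0. Qed.

Lemma qnd_aux (A : 'M[C]_(d+d)) (u : 'M[C]_(d+d)) :
  (1%:M + A *m T) \in unitmx -> A *m u + T *m u = 0 -> u = 0.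
Proof.
move=> hA h.
have : (1%:M + A *m T) *m (T *m u) = 0.
  by rewrite mulmxDl mul1mx -mulmxA (mulmxA T T) thetaK mul1mx addrC.
move/(unit_inj hA) => hT.
by rewrite -(mul1mx u) -thetaK -mulmxA hT mulmx0.
Qed.

Lemma sharp_qnd (A B : 'M[C]_(d+d)) : sharp_defined A B ->
  (1%:M + A *m T) \in unitmx -> (1%:M + B *m T) \in unitmx ->
  (1%:M + sharp A B *m T) \in unitmx.
Proof.
move=> hM hA hB; apply: inj_unit => Y hY.
pose w := T *m Y.
have hYw : Y = T *m w by rewrite /w mulmxA thetaK mul1mx.
have [u [v [e1 e2]]] := sharpEx w hM.
have k := sharpP hM e1. rewrite e2 in k.
move: hY; rewrite mulmxDl mul1mx -mulmxA -/w {1}hYw k -e1 -mulmxDr -e2.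
move=> h0.
have h1 : u + T *m (B *m v) + (v - u) = 0.
  by rewrite -(mul1mx (_ + _)) -thetaK -mulmxA h0 mulmx0.
have hv : B *m v + T *m v = 0.
  move: h1; rewrite addrC addrA subrK => h1.
  by have := congr1 (mulmx T) h1; rewrite mulmx0 mulmxDr (mulmxA T T) thetaK mul1mx addrC.
have v0 := qnd_aux hB hv.
move: e1; rewrite v0 mulmx0 addr0 sub0r mulmxN => e1.
have u0 : u = 0 by apply: (qnd_aux hA); rewrite -e1 addNr.
by rewrite hYw -e2 u0 v0 !mulmx0 add0r mulmx0.
Qed.
End S3.
Section S4.
Variable C : numClosedFieldType.
Local Notation cj := (map_mx (@Num.conj C)).
Definition rp (c : C) := c + c^*.
Definition qf m (N : 'M[C]_m) (z : 'cV[C]_m) : C := ((cj z)^T *m N *m z) 0 0.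

Lemma cj_real m (x : 'cV[C]_m) : (forall i, x i 0 \is Num.real) -> cj x = x.
Proof. by move=> h; apply/matrixP => i j; rewrite mxE ord1 conj_Creal. Qed.

Lemma cjK m n (x : 'M[C]_(m,n)) : cj (cj x) = x.
Proof. by apply/matrixP => i j; rewrite !mxE conjCK. Qed.

Lemma cj00 m (M : 'M[C]_m) (N : 'M[C]_(m,1)) (P : 'M[C]_(1,m)) :
  (cj (P *m M *m N)) 0 0 = ((P *m M *m N) 0 0)^*.
Proof. by rewrite mxE. Qed.

Lemma tr00 (M : 'M[C]_1) : M^T 0 0 = M 0 0.
Proof. by rewrite mxE. Qed.

Lemma real_form m (A : 'M[C]_m) (x : 'cV[C]_m) : (forall i, x i 0 \is Num.real) ->
  (x^T *m Defs.ReM A *m x) 0 0 = 2^-1 * rp ((x^T *m A *m x) 0 0).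
Proof.
move=> hx; rewrite /Defs.ReM /rp -scalemxAr -scalemxAl mxE mulmxDr mulmxDl mxE; congr (_ * (_ + _)).
by rewrite -cj00 !map_mxM -map_trmx cj_real.
Qed.

Lemma qf_real_ge0 m (A : 'M[C]_m) (x : 'cV[C]_m) : SymPos A ->
  (forall i, x i 0 \is Num.real) ->
  0 <= rp ((x^T *m A *m x) 0 0) /\ (x != 0 -> 0 < rp ((x^T *m A *m x) 0 0)).
Proof.
move=> [hs hp] hx.
have H : x != 0 -> 0 < rp ((x^T *m A *m x) 0 0).
  move=> nx; have := hp x hx nx; rewrite real_form // pmulr_rgt0 //.
  by rewrite invr_gt0 ltr0n.
split => //; have [->|nx] := eqVneq x 0; last by apply: ltW; apply: H.
by rewrite mulmx0 mxE /rp conjC0 addr0.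
Qed.
Lemma qf_pos m (A : 'M[C]_m) z : SymPos A ->
  0 <= rp (qf A z) /\ (z != 0 -> 0 < rp (qf A z)).
Proof.
move=> hA.
pose x := map_mx (fun c => 'Re c) z.
pose y := map_mx (fun c => 'Im c) z.
have rx : forall i, x i 0 \is Num.real by move=> i; rewrite mxE Creal_Re.
have ry : forall i, y i 0 \is Num.real by move=> i; rewrite mxE Creal_Im.
have hz : z = x + 'i *: y by apply/matrixP => i j; rewrite !mxE -Crect.
have hcz : cj z = x - 'i *: y.
  apply/matrixP => i j; rewrite !mxE {1}[z i j]Crect rmorphD /= rmorphM /= conjCi.
  by rewrite !conj_Creal ?Creal_Re ?Creal_Im // mulNr.
have E : qf A z = (x^T *m A *m x) 0 0 + (y^T *m A *m y) 0 0.
  rewrite /qf hcz hz linearB linearZ /= !mulmxBl !mulmxDr. rewrite -(scalemxAl _ y^T A) -(scalemxAl _ (y^T *m A) x) -(scalemxAl _ (y^T *m A) ('i *: y)) -(scalemxAr _ (x^T *m A) y) -(scalemxAr _ (y^T *m A) y).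
  set a := x^T *m A *m x; set b := x^T *m A *m y; set c := y^T *m A *m x; set e := y^T *m A *m y.
  have hc : c 0 0 = b 0 0.
    by rewrite /c /b -tr00 !trmx_mul trmxK hA.1 mulmxA.
  clearbody a b c e. rewrite !mxE hc mulrA -expr2 sqrCi mulN1r.
  by ring.
have Erp : rp (qf A z) = rp ((x^T *m A *m x) 0 0) + rp ((y^T *m A *m y) 0 0).
  by rewrite E /rp rmorphD /= addrACA.
have [px1 px2] := qf_real_ge0 hA rx; have [py1 py2] := qf_real_ge0 hA ry.
rewrite Erp; split; first by rewrite addr_ge0.
move=> nz; have [x0|nx] := eqVneq x 0.
  have ny : y != 0 by apply: contraNneq nz => y0; rewrite hz x0 y0 scaler0 addr0.
  by rewrite -[0]addr0 ler_ltD // py2.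
by rewrite -[0]addr0 ltr_leD // px2.
Qed.
End S4.
Section S5.
Variable C : numClosedFieldType.
Variable d : nat.
Local Notation T := (theta C d).
Local Notation cj := (map_mx (@Num.conj C)).

Lemma adjT n (p : 'M[C]_(d+d,n)) : (cj (T *m p))^T = (cj p)^T *m T.
Proof. by rewrite map_mxM trmx_mul theta_adj. Qed.

Lemma e00D (M N : 'M[C]_1) : (M + N) 0 0 = M 0 0 + N 0 0.
Proof. by rewrite mxE. Qed.
Lemma e00B (M N : 'M[C]_1) : (M - N) 0 0 = M 0 0 - N 0 0.
Proof. by rewrite !mxE. Qed.

Lemma qf_sharpM (A B : 'M[C]_(d+d)) (p q : 'cV[C]_(d+d)) :
  qf (sharpM A B) (col_mx p q) = qf A (T *m p) + qf B (T *m q) +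
    (((cj q)^T *m T *m p) 0 0 - ((cj p)^T *m T *m q) 0 0).
Proof.
rewrite /qf -e00B -!e00D; apply: (congr1 (fun M : 'M[C]_1 => M 0 0)).
rewrite /sharpM map_col_mx tr_col_mx mul_row_block mul_row_col !adjT.
rewrite !mulmxDl !mulmxA mulmxN mulNmx.
by rewrite [- _ + _]addrC addrACA.
Qed.

Lemma cross_rp (p q : 'cV[C]_(d+d)) :
  rp (((cj q)^T *m T *m p) 0 0 - ((cj p)^T *m T *m q) 0 0) = 0.
Proof.
have h : (((cj p)^T *m T *m q) 0 0)^* = ((cj q)^T *m T *m p) 0 0.
  rewrite -cj00 !map_mxM -map_trmx cjK theta_conj -tr00 !trmx_mul trmxK.
  by rewrite linearN /= theta_tr opprK mulmxA.
by rewrite /rp raddfB /= -h conjCK -opprB addNr.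
Qed.
Lemma rpD (a b : C) : rp (a + b) = rp a + rp b.
Proof. by rewrite /rp rmorphD addrACA. Qed.

Lemma rpC (a : C) : rp a^* = rp a.
Proof. by rewrite /rp conjCK addrC. Qed.

Lemma Tinj n (p : 'M[C]_(d+d,n)) : T *m p = 0 -> p = 0.
Proof. by move=> h; rewrite -(mul1mx p) -thetaK -mulmxA h mulmx0. Qed.

Lemma sharpM_pos (A B : 'M[C]_(d+d)) z : SymPos A -> SymPos B -> z != 0 ->
  0 < rp (qf (sharpM A B) z).
Proof.
move=> hA hB; rewrite -(vsubmxK z) qf_sharpM rpD cross_rp addr0 rpD.
set p := usubmx z; set q := dsubmx z => nz.
have [pa1 pa2] := qf_pos (T *m p) hA; have [pb1 pb2] := qf_pos (T *m q) hB.
have [tp0|tp] := eqVneq (T *m p) 0.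
  have tq : T *m q != 0.
    apply: contraNneq nz => tq0; by rewrite (Tinj tp0) (Tinj tq0) col_mx0.
  by rewrite -[0]addr0 ler_ltD // pb2.
by rewrite -[0]addr0 ltr_leD // pa2.
Qed.

Lemma sharpM_unit (A B : 'M[C]_(d+d)) : SymPos A -> SymPos B -> sharp_defined A B.
Proof.
move=> hA hB; apply: inj_unit => Y hY.
apply/matrixP => i j; rewrite mxE.
have hc : sharpM A B *m col j Y = 0 by rewrite colE mulmxA hY mul0mx.
have : col j Y = 0.
  apply/eqP; apply: contraT => nz; have := sharpM_pos hA hB nz.
  by rewrite /qf -mulmxA hc mulmx0 mxE /rp conjC0 addr0 ltxx.
by move/matrixP => /(_ i 0); rewrite !mxE.
Qed.

Lemma sharpM_tr (A B : 'M[C]_(d+d)) : Defs.is_sym A -> Defs.is_sym B -> (sharpM A B)^T = sharpM A B.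
Proof.
move=> hA hB; rewrite /sharpM tr_block_mx !trmx_mul hA hB linearN /= theta_tr opprK.
by rewrite !mulmxN !mulNmx !opprK !mulmxA.
Qed.

Lemma sharpJ_real n (x : 'M[C]_(d+d,n)) : cj (sharpJ C d *m x) = sharpJ C d *m cj x.
Proof.
by rewrite map_mxM /sharpJ map_col_mx map_mxN !map_scalar_mx /= rmorph1.
Qed.

Lemma qf_conj m (M : 'M[C]_m) (z : 'cV[C]_m) : ((cj (M *m z))^T *m z) 0 0 = (qf M z)^*.
Proof.
rewrite /qf -cj00 -[LHS]tr00 (trmx_mul _ z) trmxK !map_mxM -map_trmx cjK.
by rewrite mulmxA.
Qed.

Lemma sharp_SymPos (A B : 'M[C]_(d+d)) : SymPos A -> SymPos B -> SymPos (sharp A B).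
Proof.
move=> hA hB; have hM := sharpM_unit hA hB.
split.
  rewrite /Defs.is_sym /sharp !trmx_mul trmxK trmx_inv (sharpM_tr hA.1 hB.1).
  exact: mulmxA.
move=> x hx nx; rewrite real_form // pmulr_rgt0 ?invr_gt0 ?ltr0n //.
pose w := sharpJ C d *m x.
pose z := invmx (sharpM A B) *m w.
have hw : w = sharpM A B *m z by rewrite /z mulKVmx.
have nz : z != 0.
  apply/eqP => z0; have := hw; rewrite z0 mulmx0 /w sharpJE => /esym/eqP.
  by rewrite eq_sym col_mx_eq0 (negbTE nx) andbF.
have E : (x^T *m sharp A B *m x) 0 0 = (qf (sharpM A B) z)^*.
  have -> : x^T *m sharp A B *m x = (cj w)^T *m z.
    rewrite /w sharpJ_real cj_real // /sharp /z (trmx_mul (sharpJ C d) x) /w !mulmxA.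
    reflexivity.
  by rewrite hw qf_conj.
by rewrite E rpC sharpM_pos.
Qed.
End S5.

Theorem mainTheorem4 (C : numClosedFieldType) (d : nat) (hd : (0 < d)%N) :
  (forall A B : 'M[C]_(d + d), SymPos A -> SymPos B ->
     sharp_defined A B /\ SymPos (sharp A B)) /\
  (forall A B E : 'M[C]_(d + d), SymPos A -> SymPos B -> SymPos E ->
     sharp (sharp A B) E = sharp A (sharp B E)) /\
  (forall A B : 'M[C]_(d + d), SymPosQnd A -> SymPosQnd B ->
     SymPosQnd (sharp A B)).
Proof.
split; first by move=> A B hA hB; split; [exact: sharpM_unit | exact: sharp_SymPos].
split.
  move=> A B E hA hB hE; apply: sharp_assoc; try exact: sharpM_unit.
    by apply: sharpM_unit => //; exact: sharp_SymPos.
  by apply: sharpM_unit => //; exact: sharp_SymPos.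
move=> A B [hA dA] [hB dB]; split; first exact: sharp_SymPos.
rewrite -unitfE -unitmxE; apply: sharp_qnd; first exact: sharpM_unit.
  by rewrite unitmxE unitfE.
by rewrite unitmxE unitfE.
Qed.
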